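(* Let $0<\mu_2<\tfrac12<\mu_1<1$. For every $\epsilon\in(0,1)$ there exists a twice continuously differentiable function $f^{SD}_\epsilon:\mathbb{R}\to\mathbb{R}$, bounded below, with globally Lipschitz continuous derivative (indeed with second derivative bounded by a constant independent of $\epsilon$) and with values in a bounded interval independent of $\epsilon$, together with a sequence of steplengths $\mu_k\in[\tfrac14,1]$, such that the steepest-descent iterates $x_0=0$, $x_{k+1}=x_k-\mu_kg_k$ (with $g_k=(f^{SD}_\epsilon)'(x_k)$) satisfy the Goldstein conditions $$f(x_k)+\mu_1g_ks_k\le f(x_{k+1})\le f(x_k)+\mu_2g_ks_k,\qquad s_k=x_{k+1}-x_k,$$ for all $k$, and $|g_k|>\epsilon$ for $k<k_\epsilon$ while $|g_{k_\epsilon}|\le\epsilon$, where $k_\epsilon=\lceil\epsilon^{-2}\rceil$. *)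

(* Defs.v *)
From Stdlib Require Export Reals Lra Lia ZArith.
Open Scope R_scope.

(* Floor via Stdlib's [up]: IZR (up y) - 1 <= y < IZR (up y). *)
Definition Rfloor (y : R) : Z := (up y - 1)%Z.
Definition Rceil (y : R) : Z := (- Rfloor (- y))%Z.

Definition k_eps (eps : R) : nat := Z.to_nat (Rceil (/ (eps ^ 2))).

(* Main.v *)
Require Import Defs.
From Stdlib Require Import Reals Lra Lia ZArith.
From Coquelicot Require Import Coquelicot.
Open Scope R_scope.

Lemma glue (F G H : R -> R) (t l d : R) :
  0 < d -> (forall y, Rabs (y - t) < d -> y <= t -> F y = G y) ->
  (forall y, Rabs (y - t) < d -> t <= y -> F y = H y) ->
  derivable_pt_lim G t l -> derivable_pt_lim H t l -> derivable_pt_lim F t l.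
Proof.
  intros Hd HG HH DG DH eps Heps.
  destruct (DG eps Heps) as [d1 P1]. destruct (DH eps Heps) as [d2 P2].
  assert (Hmin: 0 < Rmin d (Rmin d1 d2)).
  { repeat apply Rmin_pos; try apply cond_pos; lra. }
  exists (mkposreal _ Hmin). intros h0 Hh0 Hlt. simpl in Hlt.
  assert (Ha := Rmin_l d (Rmin d1 d2)).
  assert (Hb := Rmin_l d1 d2). assert (Hc := Rmin_r d1 d2).
  assert (Hd' := Rmin_r d (Rmin d1 d2)).
  assert (E0 : Rabs (t - t) < d) by (replace (t-t) with 0 by ring; rewrite Rabs_R0; lra).
  assert (E1 : Rabs (t + h0 - t) < d) by (replace (t+h0-t) with h0 by ring; lra).
  destruct (Rle_or_lt h0 0) as [Hn|Hp].
  - rewrite (HG (t+h0)) by (auto; lra). rewrite (HG t) by (auto; lra).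
    apply P1; auto; lra.
  - rewrite (HH (t+h0)) by (auto; lra). rewrite (HH t) by (auto; lra).
    apply P2; auto; lra.
Qed.

Definition pw (p q : R) (M : R -> R) (x : R) : R :=
  if Rle_dec x p then M p else if Rle_dec x q then M x else M q.

Ltac solve_pw := unfold pw; repeat destruct Rle_dec;
  first [reflexivity | (f_equal; lra) | (exfalso; lra)].

Lemma pw_deriv p q M M' : p < q -> (forall x, derivable_pt_lim M x (M' x)) ->
  M' p = 0 -> M' q = 0 -> forall t, derivable_pt_lim (pw p q M) t (pw p q M' t).
Proof.
  intros Hpq DM Hp Hq t.
  assert (C : forall c, derivable_pt_lim (fun _ => c) t 0).
  { intro c. apply derivable_pt_lim_const. }
  unfold pw at 2. destruct (Rle_dec t p) as [Htp|Htp].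
  - rewrite Hp. destruct (Rle_lt_or_eq_dec _ _ Htp) as [Hl|He].
    + apply (glue _ (fun _ => M p) (fun _ => M p) t 0 (p - t)); try lra; auto;
      intros y Hy Hy2; apply Rabs_def2 in Hy; solve_pw.
    + subst t. rewrite <- Hp.
      apply (glue _ (fun _ => M p) M p _ (q - p)); try lra; auto;
      [ | | rewrite Hp; auto];
      intros y Hy Hy2; apply Rabs_def2 in Hy; solve_pw.
  - destruct (Rle_dec t q) as [Htq|Htq].
    + destruct (Rle_lt_or_eq_dec _ _ Htq) as [Hl|He].
      * assert (0 < Rmin (t - p) (q - t)) by (apply Rmin_pos; lra).
        assert (Hm1 := Rmin_l (t - p) (q - t)). assert (Hm2 := Rmin_r (t - p) (q - t)).
        apply (glue _ M M t _ (Rmin (t - p) (q - t))); auto;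
        intros y Hy Hy2; apply Rabs_def2 in Hy; solve_pw.
      * subst t.
        apply (glue _ M (fun _ => M q) q _ (q - p)); try lra; auto;
        [ | | rewrite Hq; auto];
        intros y Hy Hy2; apply Rabs_def2 in Hy; solve_pw.
    + rewrite Hq.
      apply (glue _ (fun _ => M q) (fun _ => M q) t 0 (t - q)); try lra; auto;
      intros y Hy Hy2; apply Rabs_def2 in Hy; solve_pw.
Qed.

Lemma pw_clamp p q M x : p < q -> pw p q M x = M (pw p q (fun z => z) x).
Proof. intros. unfold pw; repeat destruct Rle_dec; reflexivity || (exfalso; lra). Qed.

Lemma pw_range p q x : p < q -> p <= pw p q (fun z => z) x <= q.
Proof. intros. unfold pw; repeat destruct Rle_dec; lra. Qed.

Lemma clamp_lip p q x y : p < q ->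
  Rabs (pw p q (fun z => z) x - pw p q (fun z => z) y) <= Rabs (x - y).
Proof.
  intros. unfold pw; repeat destruct Rle_dec; unfold Rabs;
  repeat match goal with |- context[Rcase_abs ?z] => destruct (Rcase_abs z) end; lra.
Qed.

Lemma pw_cont p q M : p < q -> continuity M -> continuity (pw p q M).
Proof.
  intros Hpq CM t.
  apply continuity_pt_ext with (f := comp M (pw p q (fun z => z))).
  { intro x. unfold comp. symmetry; apply pw_clamp; auto. }
  apply continuity_pt_comp; [|apply CM].
  unfold continuity_pt, continue_in, limit1_in, limit_in. intros e He.
  exists e. split; auto. intros x [_ Hx]. simpl in *. unfold R_dist in *.
  eapply Rle_lt_trans; [apply clamp_lip; auto | auto].
Qed.

Lemma lip_of_deriv (F F' : R -> R) L :
  (forall x, derivable_pt_lim F x (F' x)) -> (forall x, Rabs (F' x) <= L) ->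
  forall t s, Rabs (F t - F s) <= L * Rabs (t - s).
Proof.
  intros DF BF.
  assert (K : forall t s, t < s -> Rabs (F t - F s) <= L * Rabs (t - s)).
  { intros t s Hts. destruct (MVT_cor2 F F' t s Hts) as [c [Hc _]].
    intros; apply DF.
    rewrite <- Rabs_Ropp. replace (- (F t - F s)) with (F s - F t) by ring.
    rewrite Hc, Rabs_mult. rewrite <- (Rabs_Ropp (t - s)).
    replace (- (t - s)) with (s - t) by ring.
    apply Rmult_le_compat_r; [apply Rabs_pos | apply BF]. }
  intros t s. destruct (Rtotal_order t s) as [H|[H|H]].
  - auto.
  - subst. replace (s - s) with 0 by ring. replace (F s - F s) with 0 by ring. rewrite Rabs_R0. right; ring.
  - rewrite <- Rabs_Ropp, <- (Rabs_Ropp (t - s)).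
    replace (- (F t - F s)) with (F s - F t) by ring.
    replace (- (t - s)) with (s - t) by ring. auto.
Qed.
Definition fM (h x : R) := -(h*x/2) - h^2/(4*PI) * sin(2*PI*x/h).
Definition fM1 (h x : R) := -(h/2) - h/2 * cos(2*PI*x/h).
Definition fM2 (h x : R) := PI * sin(2*PI*x/h).

Lemma fM_d h x : h <> 0 -> derivable_pt_lim (fM h) x (fM1 h x).
Proof.
  intros Hh. apply is_derive_Reals. unfold fM, fM1. auto_derive; auto.
  assert (PI <> 0) by (apply Rgt_not_eq, PI_RGT_0). unfold Rdiv; field; auto.
Qed.

Lemma fM1_d h x : h <> 0 -> derivable_pt_lim (fM1 h) x (fM2 h x).
Proof.
  intros Hh. apply is_derive_Reals. unfold fM1, fM2. auto_derive; auto.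
  unfold Rdiv; field; auto.
Qed.

Lemma fM2_c h : h <> 0 -> continuity (fM2 h).
Proof.
  intros Hh x. apply derivable_continuous_pt.
  exists (PI * cos (2*PI*x/h) * (2*PI/h)).
  apply is_derive_Reals. unfold fM2. auto_derive; auto. unfold Rdiv; field; auto.
Qed.

Lemma trig_k h k : h <> 0 -> sin (2*PI*(INR k*h)/h) = 0 /\ cos (2*PI*(INR k*h)/h) = 1.
Proof.
  intros Hh. replace (2*PI*(INR k*h)/h) with (0 + 2*INR k*PI) by (field; auto).
  rewrite sin_period, cos_period, sin_0, cos_0. auto.
Qed.

Lemma trig_q h N : h <> 0 ->
  sin (2*PI*((INR N + /2)*h)/h) = 0 /\ cos (2*PI*((INR N + /2)*h)/h) = -1.
Proof.
  intros Hh. replace (2*PI*((INR N + /2)*h)/h) with (PI + 2*INR N*PI) by (field; auto).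
  rewrite sin_period, cos_period, sin_PI, cos_PI. auto.
Qed.

Lemma trig_p h : h <> 0 -> sin (2*PI*(-(h/2))/h) = 0 /\ cos (2*PI*(-(h/2))/h) = -1.
Proof.
  intros Hh. replace (2*PI*(-(h/2))/h) with (- PI) by (field; auto).
  rewrite sin_neg, cos_neg, sin_PI, cos_PI. split; ring.
Qed.

Lemma keps_bounds eps : 0 < eps < 1 ->
  (1 <= k_eps eps)%nat /\ INR (k_eps eps) * eps^2 <= 1 + eps^2.
Proof.
  intros He. unfold k_eps, Rceil, Rfloor.
  assert (Hy : 0 < / eps^2) by (apply Rinv_0_lt_compat; nra).
  destruct (archimed (- / eps^2)) as [H1 H2].
  set (z := (- (up (- / eps ^ 2) - 1))%Z).
  assert (Hz : IZR z = 1 - IZR (up (- / eps^2))).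
  { unfold z. rewrite opp_IZR, minus_IZR. simpl. ring. }
  assert (Hz0 : (0 < z)%Z) by (apply lt_0_IZR; lra).
  assert (HI : INR (Z.to_nat z) = IZR z).
  { rewrite INR_IZR_INZ, Z2Nat.id; auto; lia. }
  split; [lia|].
  rewrite HI.
  assert (IZR z <= / eps^2 + 1) by lra.
  apply Rmult_le_compat_r with (r := eps^2) in H; [|nra].
  replace ((/ eps^2 + 1) * eps^2) with (1 + eps^2) in H by (field; lra). lra.
Qed.
Lemma pw_in p q M x : p <= x <= q -> pw p q M x = M x.
Proof. intros. unfold pw; repeat destruct Rle_dec; try reflexivity; f_equal; lra. Qed.

Theorem theoremA1 (mu1 mu2 : R) :
  0 < mu2 -> mu2 < 1/2 -> 1/2 < mu1 -> mu1 < 1 ->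
  exists (L lo hi : R),
    forall eps : R, 0 < eps < 1 ->
    exists (f f1 f2 : R -> R) (mu x : nat -> R),
      (forall t, derivable_pt_lim f t (f1 t)) /\
      (forall t, derivable_pt_lim f1 t (f2 t)) /\
      continuity f2 /\
      (exists m : R, forall t, m <= f t) /\
      (forall t s, Rabs (f1 t - f1 s) <= L * Rabs (t - s)) /\
      (forall t, Rabs (f2 t) <= L) /\
      (forall t, lo <= f t <= hi) /\
      (forall k, 1/4 <= mu k <= 1) /\
      x 0%nat = 0 /\
      (forall k, x (S k) = x k - mu k * f1 (x k)) /\
      (forall k,
         f (x k) + mu1 * f1 (x k) * (x (S k) - x k) <= f (x (S k)) /\
         f (x (S k)) <= f (x k) + mu2 * f1 (x k) * (x (S k) - x k)) /\
      (forall k, (k < k_eps eps)%nat -> Rabs (f1 (x k)) > eps) /\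
      Rabs (f1 (x (k_eps eps))) <= eps.
Proof.
  intros H1 H2 H3 H4.
  exists 4, (-5), 5. intros eps Heps.
  destruct (keps_bounds eps Heps) as [HK1 HK2].
  set (K := k_eps eps) in *.
  set (h := 2*eps).
  assert (Hh : 0 < h) by (unfold h; lra).
  assert (Hh0 : h <> 0) by lra.
  set (N := pred K). assert (HKN : K = S N) by (unfold N; lia).
  assert (HKR : INR K = INR N + 1) by (rewrite HKN, S_INR; ring).
  assert (HN0 := pos_INR N).
  set (p := -(h/2)). set (q := (INR N + /2)*h).
  assert (Hpq : p < q) by (unfold p, q; nra).
  assert (Hp1 : fM1 h p = 0) by (unfold fM1, p; destruct (trig_p h Hh0) as [_ ->]; ring).
  assert (Hq1 : fM1 h q = 0) by (unfold fM1, q; destruct (trig_q h N Hh0) as [_ ->]; ring).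
  assert (Hp2 : fM2 h p = 0) by (unfold fM2, p; destruct (trig_p h Hh0) as [-> _]; ring).
  assert (Hq2 : fM2 h q = 0) by (unfold fM2, q; destruct (trig_q h N Hh0) as [-> _]; ring).
  assert (Fk : forall k, (k <= N)%nat ->
    pw p q (fM h) (INR k*h) = -(h*(INR k*h)/2) /\ pw p q (fM1 h) (INR k*h) = -h).
  { intros k Hk. assert (HkN : INR k <= INR N) by (apply le_INR; auto).
    assert (Hk0 := pos_INR k).
    assert (Hin : p <= INR k * h <= q) by (unfold p, q; nra).
    rewrite !pw_in by auto. unfold fM, fM1.
    destruct (trig_k h k Hh0) as [-> ->]. assert (HPI : PI <> 0) by (apply Rgt_not_eq, PI_RGT_0). split; [field; auto | lra]. }
  assert (Fq : pw p q (fM h) q = -(h*q/2) /\ pw p q (fM1 h) q = 0).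
  { rewrite !pw_in by lra. split; auto. unfold fM, q.
    destruct (trig_q h N Hh0) as [-> _]. ring. }
  assert (B2 : forall t, Rabs (pw p q (fM2 h) t) <= 4).
  { intro t. rewrite pw_clamp by auto. unfold fM2. rewrite Rabs_mult.
    rewrite Rabs_right by (left; apply PI_RGT_0).
    assert (Hs := SIN_bound (2 * PI * pw p q (fun z => z) t / h)).
    assert (Rabs (sin (2 * PI * pw p q (fun z => z) t / h)) <= 1) by (apply Rabs_le; lra).
    assert (HP := PI_4). assert (HP0 := PI_RGT_0).
    apply Rle_trans with (PI * 1); [apply Rmult_le_compat_l; lra | lra]. }
  assert (Bf : forall t, -5 <= pw p q (fM h) t <= 5).
  { intro t. rewrite pw_clamp by auto.
    destruct (pw_range p q t Hpq) as [Ha Hb].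
    set (y := pw p q (fun z => z) t) in *.
    unfold fM. assert (Hs := SIN_bound (2 * PI * y / h)).
    assert (HP := PI_4). assert (HP0 := PI_RGT_0).
    assert (HP3 : 3 < PI) by (assert (H32 := PI2_3_2); lra).
    assert (Hc : 0 <= h^2/(4*PI) <= 1).
    { assert (Eq : h^2/(4*PI) * (4*PI) = h^2) by (field; lra).
      assert (Hh2 : h^2 < 4) by (unfold h; simpl; nra).
      assert (0 <= h^2/(4*PI)) by (apply Rle_mult_inv_pos; [simpl; nra | lra]).
      split; [auto | nra]. }
    assert (Hhq : h*q <= 8).
    { replace (h*q) with (4*(INR K * eps^2) - 2*eps^2) by (unfold q, h; rewrite HKR; field).
      assert (0 < eps^2 < 1) by (simpl; nra). lra. }
    assert (Hhy1 : h*y <= h*q) by (apply Rmult_le_compat_l; lra).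
    assert (Hhy2 : h*p <= h*y) by (apply Rmult_le_compat_l; lra).
    assert (Hhp : h*p >= -2) by (unfold p, h in *; nra).
    set (c := h^2/(4*PI)) in *. set (s := sin (2 * PI * y / h)) in *.
    nra. }
  exists (pw p q (fM h)), (pw p q (fM1 h)), (pw p q (fM2 h)),
    (fun k => if Nat.eqb k N then /2 else 1),
    (fun k => if Nat.leb k N then INR k * h else q).
  split; [intro t; apply pw_deriv; auto; intro; apply fM_d; auto|].
  split; [intro t; apply pw_deriv; auto; intro; apply fM1_d; auto|].
  split; [apply pw_cont; auto; apply fM2_c; auto|].
  split; [exists (-5); intro t; apply Bf|].
  split; [apply lip_of_deriv with (F' := pw p q (fM2 h)); auto;
          intro; apply pw_deriv; auto; intro; apply fM1_d; auto|].
  split; [exact B2|].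
  split; [exact Bf|].
  split; [intro k; destruct (Nat.eqb k N); lra|].
  split; [simpl; ring|].
  assert (Hlt : forall k, (k < N)%nat -> Nat.leb k N = true /\ Nat.leb (S k) N = true /\ Nat.eqb k N = false).
  { intros k Hk. repeat split; [apply Nat.leb_le | apply Nat.leb_le | apply Nat.eqb_neq]; lia. }
  assert (Hgt : forall k, (N < k)%nat -> Nat.leb k N = false /\ Nat.leb (S k) N = false /\ Nat.eqb k N = false).
  { intros k Hk. repeat split; [apply Nat.leb_gt | apply Nat.leb_gt | apply Nat.eqb_neq]; lia. }
  assert (HeqN : Nat.leb N N = true /\ Nat.leb (S N) N = false /\ Nat.eqb N N = true).
  { repeat split; [apply Nat.leb_le | apply Nat.leb_gt | apply Nat.eqb_eq]; lia. }
  assert (Hhh : 0 < h*h) by nra.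
  split.
  { intro k. destruct (lt_eq_lt_dec k N) as [[Hk|Hk]|Hk].
    - destruct (Hlt k Hk) as [-> [-> ->]]. destruct (Fk k ltac:(lia)) as [_ ->].
      rewrite S_INR; ring.
    - subst k. destruct HeqN as [-> [-> ->]]. destruct (Fk N ltac:(lia)) as [_ ->].
      unfold q; field.
    - destruct (Hgt k Hk) as [-> [-> ->]]. destruct Fq as [_ ->]. ring. }
  split.
  { intro k. destruct (lt_eq_lt_dec k N) as [[Hk|Hk]|Hk].
    - destruct (Hlt k Hk) as [-> [-> _]]. destruct (Fk k ltac:(lia)) as [-> ->].
      destruct (Fk (S k) ltac:(lia)) as [-> _].
      rewrite S_INR. split; nra.
    - subst k. destruct HeqN as [-> [-> _]]. destruct (Fk N ltac:(lia)) as [-> ->].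
      destruct Fq as [-> _]. unfold q. split; nra.
    - destruct (Hgt k Hk) as [-> [-> _]]. destruct Fq as [-> ->]. split; lra. }
  split.
  { intros k Hk. assert (Hk' : (k <= N)%nat) by lia.
    replace (Nat.leb k N) with true by (symmetry; apply Nat.leb_le; auto).
    destruct (Fk k Hk') as [_ ->]. rewrite Rabs_Ropp, Rabs_right by lra. unfold h; lra. }
  rewrite HKN. destruct HeqN as [_ [-> _]]. destruct Fq as [_ ->].
  rewrite Rabs_R0; lra.
Qed.
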